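(* Let $C_1=\{(x,y)\in\mathbb{Z}^2: x\ge0,\ |y|\le x\}$ and $\alpha>0$. Then the divisible sandpile $s_0=(1+\alpha)\mathbf 1_{C_1}$ on the square lattice $\mathbb{Z}^2$ does not stabilize.
   Context: $\mathbb{Z}^2$ has its nearest-neighbour graph structure, $\Delta u(x)=\sum_{y\sim x}(u(y)-u(x))$. $s$ stabilizes if there exists $f:\mathbb{Z}^2\to[0,\infty)$ with $s+\Delta f\le1$ pointwise. *)

(* Defs.v *)
From Stdlib Require Import Reals ZArith.
Open Scope R_scope.

Definition laplacian (u : Z -> Z -> R) (x y : Z) : R :=
  (u (x + 1)%Z y - u x y) + (u (x - 1)%Z y - u x y)
  + (u x (y + 1)%Z - u x y) + (u x (y - 1)%Z - u x y).

Definition stabilizes (s : Z -> Z -> R) : Prop :=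
  exists f : Z -> Z -> R,
    (forall x y, 0 <= f x y) /\
    (forall x y, s x y + laplacian f x y <= 1).

Definition indC1 (x y : Z) : R :=
  if Z_le_dec 0 x then (if Z_le_dec (Z.abs y) x then 1 else 0) else 0.

(* Main.v *)
Require Import Defs.
From Stdlib Require Import Reals ZArith Lia Lra Psatz.
Open Scope R_scope.

Fixpoint sumZ (lo : Z) (n : nat) (g : Z -> R) : R :=
  match n with O => 0 | S n => g lo + sumZ (lo + 1)%Z n g end.

Lemma sumZ_ext lo n g h : (forall k, g k = h k) -> sumZ lo n g = sumZ lo n h.
Proof. intros H; revert lo; induction n; intros lo; simpl; [reflexivity|]. rewrite H, IHn; reflexivity. Qed.

Lemma sumZ_add lo n g h : sumZ lo n (fun k => g k + h k) = sumZ lo n g + sumZ lo n h.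
Proof. revert lo; induction n; intros lo; simpl; [ring|]. rewrite IHn; ring. Qed.

Lemma sumZ_scal lo n c g : sumZ lo n (fun k => c * g k) = c * sumZ lo n g.
Proof. revert lo; induction n; intros lo; simpl; [ring|]. rewrite IHn; ring. Qed.

Lemma sumZ_le lo n g h : (forall k, g k <= h k) -> sumZ lo n g <= sumZ lo n h.
Proof. intros H; revert lo; induction n; intros lo; simpl; [lra|]. specialize (IHn (lo+1)%Z). specialize (H lo). lra. Qed.

Lemma sumZ_Sr lo n g : sumZ lo (S n) g = sumZ lo n g + g (lo + Z.of_nat n)%Z.
Proof. revert lo; induction n; intros lo.
  - simpl. replace (lo + 0)%Z with lo by lia. ring.
  - change (sumZ lo (S (S n)) g) with (g lo + sumZ (lo+1)%Z (S n) g).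
    rewrite IHn. simpl. replace (lo + 1 + Z.of_nat n)%Z with (lo + Z.pos (Pos.of_succ_nat n))%Z by lia. ring. Qed.

Lemma sumZ_shift lo n g c : sumZ lo n (fun k => g (k + c)%Z) = sumZ (lo + c)%Z n g.
Proof. revert lo; induction n; intros lo; simpl; [reflexivity|]. rewrite IHn.
  replace (lo + 1 + c)%Z with (lo + c + 1)%Z by lia. reflexivity. Qed.

Lemma sumZ_zero lo n g : (forall k, (lo <= k)%Z -> g k = 0) -> sumZ lo n g = 0.
Proof. revert lo; induction n; intros lo H; simpl; [reflexivity|]. rewrite H by lia. rewrite IHn; [ring|]. intros; apply H; lia. Qed.

Lemma sumZ_single lo n g p : (lo <= p < lo + Z.of_nat n)%Z -> (forall k, k <> p -> g k = 0) -> sumZ lo n g = g p.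
Proof. revert lo; induction n; intros lo Hp Hz; simpl in *; [lia|].
  destruct (Z.eq_dec lo p) as [->|Hne].
  - rewrite sumZ_zero; [ring|]. intros; apply Hz; lia.
  - rewrite Hz by auto. rewrite IHn; auto; [ring|lia]. Qed.

Lemma sumZ_Sl lo n g : sumZ lo (S n) g = g lo + sumZ (lo+1)%Z n g.
Proof. reflexivity. Qed.

Definition SK (K : nat) (g : Z -> R) : R := sumZ (- Z.of_nat K)%Z (2*K+1) g.

Lemma SK_shift K (h : Z -> R) c : (c = 1 \/ c = -1)%Z ->
  h (- Z.of_nat K - 1)%Z = 0 -> h (- Z.of_nat K)%Z = 0 -> h (Z.of_nat K) = 0 -> h (Z.of_nat K + 1)%Z = 0 ->
  SK K (fun k => h (k + c)%Z) = SK K h.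
Proof. intros Hc H1 H2 H3 H4. unfold SK. rewrite sumZ_shift.
  destruct Hc as [->| ->].
  - pose proof (sumZ_Sr (- Z.of_nat K) (2*K+1) h) as E. rewrite sumZ_Sl in E.
    replace (- Z.of_nat K + Z.of_nat (2*K+1))%Z with (Z.of_nat K + 1)%Z in E by lia.
    rewrite H2, H4 in E. lra.
  - pose proof (sumZ_Sr (- Z.of_nat K + -1) (2*K+1) h) as E. rewrite sumZ_Sl in E.
    replace (- Z.of_nat K + -1 + Z.of_nat (2*K+1))%Z with (Z.of_nat K)%Z in E by lia.
    replace (- Z.of_nat K + -1 + 1)%Z with (- Z.of_nat K)%Z in E by lia.
    replace (- Z.of_nat K + -1)%Z with (- Z.of_nat K - 1)%Z in E by lia.
    rewrite H1, H3 in E. replace (- Z.of_nat K + -1)%Z with (- Z.of_nat K - 1)%Z by lia. lra.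
Qed.

Lemma SK_ext K g h : (forall k, g k = h k) -> SK K g = SK K h.
Proof. apply sumZ_ext. Qed.
Lemma SK_add K g h : SK K (fun k => g k + h k) = SK K g + SK K h.
Proof. apply sumZ_add. Qed.
Lemma SK_scal K c g : SK K (fun k => c * g k) = c * SK K g.
Proof. apply sumZ_scal. Qed.
Lemma SK_le K g h : (forall k, g k <= h k) -> SK K g <= SK K h.
Proof. apply sumZ_le. Qed.

Fixpoint a (t : nat) (u : Z) : R :=
  match t with
  | O => if Z.eq_dec u 1 then 1 else 0
  | S t => if Z_lt_dec 0 u then (a t (u-1) + a t (u+1)) / 2 else 0
  end.

Lemma a_nonneg t u : 0 <= a t u.
Proof. revert u; induction t; intros u; simpl.
  - destruct Z.eq_dec; lra.
  - destruct Z_lt_dec; [|lra]. pose proof (IHt (u-1)%Z); pose proof (IHt (u+1)%Z); lra. Qed.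

Lemma a_supp t u : a t u <> 0 -> (1 <= u <= Z.of_nat t + 1)%Z.
Proof. revert u; induction t; intros u H; simpl in H.
  - destruct Z.eq_dec; [simpl; lia|lra].
  - destruct Z_lt_dec; [|lra]. rewrite Nat2Z.inj_succ.
    destruct (Req_dec (a t (u-1)) 0) as [E1|E1].
    + destruct (Req_dec (a t (u+1)) 0) as [E2|E2]. { rewrite E1, E2 in H; lra. }
      apply IHt in E2. lia.
    + apply IHt in E1. lia. Qed.

Lemma a_zero t u : (u < 1 \/ Z.of_nat t + 1 < u)%Z -> a t u = 0.
Proof. intros H. destruct (Req_dec (a t u) 0); auto. apply a_supp in H0. lia. Qed.

Lemma a_par t u : a t u <> 0 -> exists k, (u + Z.of_nat t = 2*k+1)%Z.
Proof. revert u; induction t; intros u H; simpl in H.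
  - destruct Z.eq_dec; [exists 0%Z; simpl; lia|lra].
  - destruct Z_lt_dec; [|lra]. rewrite Nat2Z.inj_succ.
    destruct (Req_dec (a t (u-1)) 0) as [E1|E1].
    + destruct (Req_dec (a t (u+1)) 0) as [E2|E2]. { rewrite E1, E2 in H; lra. }
      apply IHt in E2. destruct E2 as [k Hk]. exists (k)%Z. lia.
    + apply IHt in E1. destruct E1 as [k Hk]. exists (k+1)%Z. lia. Qed.

Lemma a_le_b t u : a (S t) u <= (a t (u-1) + a t (u+1)) / 2.
Proof. simpl. destruct Z_lt_dec; [lra|]. pose proof (a_nonneg t (u-1)); pose proof (a_nonneg t (u+1)); lra. Qed.

Lemma a_b t u (g : Z -> R) : g 0%Z = 0 -> g u * a (S t) u = g u * ((a t (u-1) + a t (u+1)) / 2).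
Proof. intros H0. simpl. destruct Z_lt_dec; [reflexivity|].
  destruct (Z.eq_dec u 0) as [->|Hn]. { rewrite H0; ring. }
  rewrite (a_zero t (u-1)) by lia. rewrite (a_zero t (u+1)) by lia. rewrite Rplus_0_l; unfold Rdiv; rewrite Rmult_0_l; reflexivity. Qed.

Lemma a_bnd t K : (t + 2 <= K)%nat -> forall k, (k = - Z.of_nat K - 1 \/ k = - Z.of_nat K \/ k = Z.of_nat K \/ k = Z.of_nat K + 1)%Z -> a t k = 0.
Proof. intros H k Hk. apply a_zero. lia. Qed.

Lemma SK_shift_a t K (g : Z -> R) c : (t + 2 <= K)%nat -> (c = 1 \/ c = -1)%Z ->
  SK K (fun k => a t (k + c)%Z * g k) = SK K (fun k => a t k * g (k - c)%Z).
Proof. intros HK Hc.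
  rewrite <- (SK_shift K (fun k => a t k * g (k - c)%Z) c Hc).
  - apply SK_ext; intros k. f_equal. f_equal. lia.
  - rewrite (a_bnd t K HK); [ring|lia].
  - rewrite (a_bnd t K HK); [ring|lia].
  - rewrite (a_bnd t K HK); [ring|lia].
  - rewrite (a_bnd t K HK); [ring|lia].
Qed.

Lemma SK_step t K (g : Z -> R) : (t + 2 <= K)%nat -> g 0%Z = 0 ->
  SK K (fun u => g u * a (S t) u) = / 2 * SK K (fun u => (g (u+1)%Z + g (u-1)%Z) * a t u).
Proof. intros HK H0.
  rewrite (SK_ext K _ (fun u => / 2 * (a t (u + -1)%Z * g u + a t (u + 1)%Z * g u))).
  2:{ intros u. rewrite (a_b t u g H0). replace (u - 1)%Z with (u + -1)%Z by lia. unfold Rdiv. ring. }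
  rewrite SK_scal, SK_add. rewrite !SK_shift_a by (auto; lia).
  rewrite <- SK_add. f_equal. apply SK_ext. intros u.
  replace (u - -1)%Z with (u+1)%Z by lia. ring. Qed.

Definition s K t := SK K (a t).
Definition m1 K t := SK K (fun u => IZR u * a t u).
Definition m2 K t := SK K (fun u => IZR u * IZR u * a t u).

Lemma m1_S K t : (t + 2 <= K)%nat -> m1 K (S t) = m1 K t.
Proof. intros HK. unfold m1. rewrite (SK_step t K IZR HK) by reflexivity.
  rewrite <- SK_scal. apply SK_ext; intros u. rewrite plus_IZR, minus_IZR. field. Qed.

Lemma m2_S K t : (t + 2 <= K)%nat -> m2 K (S t) = m2 K t + s K t.
Proof. intros HK. unfold m2, s. rewrite (SK_step t K (fun u => IZR u * IZR u) HK) by (simpl; ring).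
  rewrite <- SK_add, <- SK_scal. apply SK_ext; intros u. rewrite plus_IZR, minus_IZR. field. Qed.

Lemma SK_a0 K (g : Z -> R) : (1 <= K)%nat -> SK K (fun u => g u * a 0 u) = g 1%Z.
Proof. intros HK. unfold SK. rewrite (sumZ_single _ _ _ 1%Z).
  - simpl. first [ring | (destruct Z.eq_dec; [ring|lia])].
  - lia.
  - intros k Hk. simpl. destruct Z.eq_dec; [lia|ring]. Qed.

Lemma m1_0 K : (1 <= K)%nat -> m1 K 0 = 1.
Proof. intros; unfold m1; rewrite SK_a0; auto. Qed.
Lemma m2_0 K : (1 <= K)%nat -> m2 K 0 = 1.
Proof. intros; unfold m2; rewrite SK_a0; auto; simpl; ring. Qed.

Lemma s_nonneg K t : 0 <= s K t.
Proof. unfold s. unfold SK. rewrite <- (sumZ_zero (- Z.of_nat K) (2*K+1) (fun _ => 0)) by auto.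
  apply sumZ_le. intros; apply a_nonneg. Qed.

Lemma m1_eq K t : (t + 2 <= K)%nat -> m1 K t = 1.
Proof. induction t; intros HK. apply m1_0; lia. rewrite m1_S by lia. apply IHt; lia. Qed.

Lemma m2_ge1 K t : (t + 2 <= K)%nat -> 1 <= m2 K t.
Proof. induction t; intros HK. rewrite m2_0 by lia; lra. rewrite m2_S by lia. pose proof (s_nonneg K t). pose proof (IHt ltac:(lia)). lra. Qed.

Lemma CS K t : (t + 2 <= K)%nat -> 1 <= s K t * m2 K t.
Proof. intros HK. pose proof (m1_eq K t HK) as E1. pose proof (m2_ge1 K t HK) as E2.
  assert (Q : forall l, 0 <= s K t * (l*l) - 2 * l * m1 K t + m2 K t).
  { intros l.
    assert (0 <= SK K (fun u => (IZR u - l) * (IZR u - l) * a t u)).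
    { unfold SK. rewrite <- (sumZ_zero (- Z.of_nat K) (2*K+1) (fun _ => 0)) by auto.
      apply sumZ_le. intros u. pose proof (a_nonneg t u). apply Rmult_le_pos; auto. apply Rle_0_sqr. }
    assert (E : SK K (fun u => (IZR u - l) * (IZR u - l) * a t u) = s K t * (l*l) - 2 * l * m1 K t + m2 K t).
    { unfold s, m1, m2.
      rewrite (SK_ext K _ (fun u => (l*l) * a t u + ((-2*l) * (IZR u * a t u) + IZR u * IZR u * a t u)))
        by (intros; ring).
      rewrite SK_add, SK_add, SK_scal, SK_scal. ring. }
    lra. }
  rewrite E1 in Q. pose proof (s_nonneg K t).
  destruct (Req_dec (s K t) 0) as [Z|Z].
  - specialize (Q (m2 K t)). rewrite Z in Q. nra.
  - specialize (Q (/ s K t)). 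
    assert (s K t * (/ s K t * / s K t) - 2 * / s K t * 1 + m2 K t = m2 K t - / s K t) by (field; auto).
    rewrite H0 in Q. assert (0 < s K t) by lra.
    apply (Rmult_le_compat_l (s K t)) in Q; [|lra].
    replace (s K t * (m2 K t - / s K t)) with (s K t * m2 K t - 1) in Q by (field; auto). lra.
Qed.

Section TwoD.
Variable f : Z -> Z -> R.

Definition F (u v : Z) : R := f ((u + v) / 2)%Z ((u - v) / 2)%Z.

Lemma F_eq u v x y : (u = x + y)%Z -> (v = x - y)%Z -> F u v = f x y.
Proof. intros -> ->. unfold F. replace (x + y + (x - y))%Z with (x * 2)%Z by lia.
  replace (x + y - (x - y))%Z with (y * 2)%Z by lia. rewrite !Z.div_mul by lia. reflexivity. Qed.

Definition SS K (H : Z -> Z -> R) := SK K (fun u => SK K (fun v => H u v)).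

Lemma SS_ext K G H : (forall u v, G u v = H u v) -> SS K G = SS K H.
Proof. intros E. apply SK_ext; intros u. apply SK_ext; intros v. apply E. Qed.
Lemma SS_add K G H : SS K (fun u v => G u v + H u v) = SS K G + SS K H.
Proof. unfold SS. rewrite <- SK_add. apply SK_ext; intros u. apply SK_add. Qed.
Lemma SS_scal K c G : SS K (fun u v => c * G u v) = c * SS K G.
Proof. unfold SS. rewrite <- SK_scal. apply SK_ext; intros u. apply SK_scal. Qed.
Lemma SS_le K G H : (forall u v, G u v <= H u v) -> SS K G <= SS K H.
Proof. intros E. apply SK_le; intros u. apply SK_le; intros v. apply E. Qed.

Lemma SS_shift t K (G : Z -> Z -> R) c d : (t + 2 <= K)%nat -> (c = 1 \/ c = -1)%Z -> (d = 1 \/ d = -1)%Z ->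
  SS K (fun u v => a t (u + c)%Z * a t (v + d)%Z * G u v) = SS K (fun u v => a t u * a t v * G (u - c)%Z (v - d)%Z).
Proof. intros HK Hc Hd. unfold SS.
  rewrite (SK_ext K _ (fun u => a t (u + c)%Z * SK K (fun v => a t v * G u (v - d)%Z))).
  2:{ intros u. rewrite <- SK_scal. rewrite (SK_ext K _ (fun v => a t (v + d)%Z * (a t (u+c)%Z * G u v))) by (intros; ring).
      rewrite SK_shift_a by auto. apply SK_ext; intros; ring. }
  rewrite SK_shift_a by auto. apply SK_ext; intros u. rewrite <- SK_scal. apply SK_ext; intros; ring. Qed.

Definition L K t := SS K (fun u v => a t u * a t v * F u v).

Variable alpha : R.
Hypothesis fpos : forall x y, 0 <= f x y.
Hypothesis Hf : forall x y, (1 + alpha) * indC1 x y + laplacian f x y <= 1.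

Lemma key t u v : a t u * a t v * (/4 * (F (u - -1) (v - -1) + F (u - -1) (v - 1) + F (u - 1) (v - -1) + F (u - 1) (v - 1)))
  <= a t u * a t v * (F u v - alpha / 4).
Proof.
  destruct (Req_dec (a t u) 0) as [Z1|Z1]. { rewrite Z1. lra. }
  destruct (Req_dec (a t v) 0) as [Z2|Z2]. { rewrite Z2. lra. }
  pose proof (a_supp _ _ Z1). pose proof (a_supp _ _ Z2).
  destruct (a_par _ _ Z1) as [k Hk]. destruct (a_par _ _ Z2) as [j Hj].
  set (x := (k + j + 1 - Z.of_nat t)%Z). set (y := (k - j)%Z).
  rewrite (F_eq u v x y) by (unfold x, y; lia).
  rewrite (F_eq _ _ (x+1) y) by (unfold x, y; lia).
  rewrite (F_eq _ _ x (y+1)) by (unfold x, y; lia).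
  rewrite (F_eq _ _ x (y-1)) by (unfold x, y; lia).
  rewrite (F_eq _ _ (x-1) y) by (unfold x, y; lia).
  pose proof (Hf x y) as Hxy. unfold indC1, laplacian in Hxy.
  destruct (Z_le_dec 0 x); [|unfold x,y in *; lia].
  destruct (Z_le_dec (Z.abs y) x); [|unfold x,y in *; lia].
  apply Rmult_le_compat_l. apply Rmult_le_pos; apply a_nonneg. lra. Qed.

Lemma SS_prod K t : SS K (fun u v => a t u * a t v) = s K t * s K t.
Proof. unfold s, SS.
  rewrite (SK_ext K _ (fun u => a t u * SK K (a t))). 2:{ intros u. rewrite <- SK_scal. reflexivity. }
  rewrite (SK_ext K _ (fun u => SK K (a t) * a t u)) by (intros; ring). rewrite SK_scal. ring. Qed.

Lemma L_step K t : (t + 3 <= K)%nat -> L K (S t) <= L K t - alpha / 4 * (s K t * s K t).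
Proof. intros HK. unfold L.
  set (b := fun u => (a t (u-1) + a t (u+1)) / 2).
  apply Rle_trans with (SS K (fun u v => b u * b v * F u v)).
  { apply SS_le. intros u v. pose proof (fpos ((u+v)/2)%Z ((u-v)/2)%Z). fold (F u v) in H.
    pose proof (a_le_b t u). pose proof (a_le_b t v). pose proof (a_nonneg (S t) u). pose proof (a_nonneg (S t) v).
    apply Rmult_le_compat_r; auto. apply Rmult_le_compat; auto. }
  rewrite (SS_ext K _ (fun u v => /4 * (a t (u + -1)%Z * a t (v + -1)%Z * F u v + a t (u + -1)%Z * a t (v + 1)%Z * F u v
     + a t (u + 1)%Z * a t (v + -1)%Z * F u v + a t (u + 1)%Z * a t (v + 1)%Z * F u v))).
  2:{ intros u v. unfold b. replace (u - 1)%Z with (u + -1)%Z by lia. replace (v - 1)%Z with (v + -1)%Z by lia. field. }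
  rewrite SS_scal, !SS_add, !SS_shift by (auto; lia).
  rewrite <- !SS_add, <- SS_scal.
  apply Rle_trans with (SS K (fun u v => a t u * a t v * (F u v - alpha / 4))).
  { apply SS_le. intros u v. eapply Rle_trans; [|apply key]. right. ring. }
  rewrite (SS_ext K _ (fun u v => a t u * a t v * F u v + (- (alpha/4)) * (a t u * a t v))) by (intros; ring).
  rewrite SS_add, SS_scal, SS_prod. right. ring. Qed.

Lemma L_nonneg K t : 0 <= L K t.
Proof. unfold L. apply Rle_trans with (SS K (fun _ _ => 0)).
  - right. unfold SS, SK. rewrite sumZ_zero; auto. intros. rewrite sumZ_zero; auto.
  - apply SS_le. intros. pose proof (a_nonneg t u); pose proof (a_nonneg t v); pose proof (fpos ((u+v)/2)%Z ((u-v)/2)%Z).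
    unfold F. repeat apply Rmult_le_pos; auto. Qed.

Lemma L_0 K : (1 <= K)%nat -> L K 0 = f 1%Z 0%Z.
Proof. intros HK. unfold L, SS.
  rewrite (SK_ext K _ (fun u => SK K (fun v => F u v * a 0 v) * a 0 u)).
  2:{ intros u. rewrite Rmult_comm, <- SK_scal. apply SK_ext; intros; ring. }
  rewrite (SK_a0 K (fun u => SK K (fun v => F u v * a 0 v))) by auto.
  rewrite SK_a0 by auto. apply F_eq; lia. Qed.
End TwoD.

Fixpoint ps K t := match t with O => 0 | S t => ps K t + s K t * s K t end.

Lemma m2_exp K t : (t + 2 <= K)%nat -> m2 K t <= exp (ps K t).
Proof. induction t; intros HK; simpl.
  - rewrite m2_0 by lia. rewrite exp_0. lra.
  - rewrite m2_S by lia. rewrite exp_plus. specialize (IHt ltac:(lia)).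
    pose proof (CS K t ltac:(lia)). pose proof (s_nonneg K t). pose proof (m2_ge1 K t ltac:(lia)).
    pose proof (exp_ineq1_le (s K t * s K t)).
    assert (s K t <= m2 K t * (s K t * s K t)) by nra.
    assert (m2 K t * (1 + s K t * s K t) <= exp (ps K t) * exp (s K t * s K t)).
    { apply Rmult_le_compat; try lra. nra. }
    nra. Qed.

Lemma m2_sq K t : (t + 2 <= K)%nat -> 1 + 2 * INR t <= m2 K t * m2 K t.
Proof. induction t; intros HK.
  - rewrite m2_0 by lia. simpl. lra.
  - rewrite m2_S by lia. rewrite S_INR. specialize (IHt ltac:(lia)).
    pose proof (CS K t ltac:(lia)). pose proof (s_nonneg K t). nra. Qed.

Theorem lemma6p1 (alpha : R) (halpha : 0 < alpha) :
  ~ stabilizes (fun x y => (1 + alpha) * indC1 x y).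
Proof.
  intros [f [fpos Hf]].
  assert (Lb : forall K t, (t + 2 <= K)%nat -> L f K t + alpha / 4 * ps K t <= f 1%Z 0%Z).
  { intros K t. induction t; intros HK.
    - rewrite L_0 by lia. simpl. lra.
    - simpl. pose proof (L_step f alpha fpos Hf K t ltac:(lia)). specialize (IHt ltac:(lia)). lra. }
  set (B := f 1%Z 0%Z).
  set (E := exp (4 * B / alpha)).
  destruct (INR_archimed 1 (E * E)) as [T HT]; [lra|].
  set (K := (T + 2)%nat).
  pose proof (Lb K T ltac:(unfold K; lia)) as H1.
  pose proof (L_nonneg f fpos K T) as H2.
  assert (ps K T <= 4 * B / alpha).
  { apply (Rmult_le_reg_l (alpha / 4)). lra. unfold B in *. field_simplify; lra. }
  pose proof (m2_exp K T ltac:(unfold K; lia)).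
  assert (exp (ps K T) <= E). { unfold E. destruct (Rle_lt_or_eq_dec _ _ H) as [h|h]; [left; apply exp_increasing; auto | rewrite h; lra]. }
  pose proof (m2_sq K T ltac:(unfold K; lia)).
  pose proof (m2_ge1 K T ltac:(unfold K; lia)).
  pose proof (pos_INR T).
  assert (m2 K T * m2 K T <= E * E) by (apply Rmult_le_compat; lra).
  lra.
Qed.
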